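(* Let $p$ be a prime, $s\geq 2$, and $\lambda_i\in\{0,1,\dots,p-1\}$ for $i\in\{0,\dots,s-1\}$. Then $$\tau_s\Big(\sum_{i=0}^{s-1}\lambda_ip^i\Big)=\sum_{i=0}^{s-1}\tau_s(\lambda_ip^i)\quad\text{in }\mathbb{Z}_{p^{s-1}}^p.$$
   Context: For $r\geq1$ and $u\in\mathbb{Z}_{p^r}$ with $p$-ary expansion $u=\sum_{i=0}^{r-1}u_ip^i$, $\phi_r(u)=(u_{r-1},\dots,u_{r-1})+(u_0,\dots,u_{r-2})Y_{r-1}\in\mathbb{Z}_p^{p^{r-1}}$, where $Y_1=(0\ 1\ \cdots\ p-1)$ and $Y_k$ is the $k\times p^k$ matrix with first $k-1$ rows $(Y_{k-1}\ \cdots\ Y_{k-1})$ ($p$ copies) and last row $(0,\dots,0,1,\dots,1,\dots,p-1,\dots,p-1)$ (blocks of length $p^{k-1}$); $\phi_1=\mathrm{id}$; $\Phi_r$ applies $\phi_r$ coordinatewise and concatenates. $\gamma_s$ is the coordinate permutation of $\mathbb{Z}_p^{p^{s-1}}$ given by $\gamma_s(\mathbf{x})_{j+ip+1}=\mathbf{x}_{jp^{s-2}+i+1}$ for $j\in\{0,\dots,p-1\}$, $i\in\{0,\dots,p^{s-2}-1\}$. The map $\tau_s:\mathbb{Z}_{p^s}\to\mathbb{Z}_{p^{s-1}}^p$ is $\tau_s(u)=\Phi_{s-1}^{-1}(\gamma_s^{-1}(\phi_s(u)))$. *)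

(* Defs.v *)
From HB Require Import structures.
From mathcomp Require Import all_boot all_order all_algebra.
Set Implicit Arguments. Unset Strict Implicit. Unset Printing Implicit Defensive.
Import GRing.Theory.
Local Open Scope ring_scope.

Definition vat (R : zmodType) (N : nat) (x : 'rV[R]_N) (k : nat) : R :=
  match @insub _ (fun k => k < N)%N 'I_N k with Some i => x 0 i | None => 0 end.

Definition digit (p i u : nat) : nat := ((u %/ p ^ i) %% p)%N.

(* Entries of Y_k (0-based row i, column j), following the recursive
   definition: first k-1 rows are p copies of Y_{k-1}, last row is the
   block row (0..0,1..1,...,p-1..p-1) with blocks of length p^{k-1};
   for k = 1 this gives Y_1 = (0 1 ... p-1). *)
Fixpoint Yent (p k i j : nat) : nat :=
  match k with
  | 0 => 0
  | k'.+1 => if (i < k')%N then Yent p k' i (j %% p ^ k') else (j %/ p ^ k')%N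
  end.

Definition Ymx (p k : nat) : 'M['Z_p]_(k, p ^ k) :=
  \matrix_(i < k, j < p ^ k) (Yent p k i j)%:R.

Definition phi (p r : nat) (u : 'Z_(p ^ r)) : 'rV['Z_p]_(p ^ (r - 1)) :=
  const_mx (digit p (r - 1) u)%:R
  + (\row_(i < r - 1) ((digit p i u)%:R : 'Z_p)) *m Ymx p (r - 1).

(* Phi_r : Z_{p^r}^n -> Z_p^{n p^{r-1}}, coordinatewise phi_r then concatenation
   (the output length N is n * p^(r-1) in every use). *)
Definition Phi (p r n N : nat) (v : 'rV['Z_(p ^ r)]_n) : 'rV['Z_p]_N :=
  \row_(k < N) vat (phi (vat v (k %/ p ^ (r - 1))%N)) (k %% p ^ (r - 1))%N.

Definition gamma (p s : nat) (x : 'rV['Z_p]_(p ^ (s - 1))) : 'rV['Z_p]_(p ^ (s - 1)) :=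
  \row_(k < p ^ (s - 1)) vat x ((k %% p) * p ^ (s - 2) + k %/ p)%N.

Definition gamma_inv (p s : nat) (y : 'rV['Z_p]_(p ^ (s - 1))) : 'rV['Z_p]_(p ^ (s - 1)) :=
  odflt 0 [pick x | gamma x == y].

Definition tau (p s : nat) (u : 'Z_(p ^ s)) : 'rV['Z_(p ^ (s - 1))]_p :=
  odflt 0 [pick v : 'rV['Z_(p ^ (s - 1))]_p |
             Phi (p ^ (s - 1)) v == gamma_inv (phi u)].
Arguments tau p s u : clear implicits.

(* Main.v *)
Require Import Defs.
From HB Require Import structures.
From mathcomp Require Import all_boot all_order all_algebra.
From mathcomp Require Import zify.
Import GRing.Theory.
Local Open Scope ring_scope.

Lemma vatE (R : zmodType) N (x : 'rV[R]_N) (i : 'I_N) : vat x i = x 0 i.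
Proof. by rewrite /vat valK. Qed.
Arguments vatE {R N}.

Lemma vat_inj (R : zmodType) N (x y : 'rV[R]_N) :
  (forall k, (k < N)%N -> vat x k = vat y k) -> x = y.
Proof.
move=> H; apply/matrixP => i j; rewrite (ord1 i).
by have := H j (ltn_ord j); rewrite !vatE.
Qed.

Lemma digit0 p a M : (a < p)%N -> digit p 0 (a + p * M) = a.
Proof.
move=> ha; rewrite /digit expn0 divn1 addnC mulnC modnMDl modn_small //.
Qed.

Lemma digit_div p j n : digit p j.+1 n = digit p j (n %/ p).
Proof. by rewrite /digit expnS divnMA. Qed.

Lemma digitS p j a M : (a < p)%N -> digit p j.+1 (a + p * M) = digit p j M.
Proof.
move=> ha; rewrite digit_div; congr digit.
have p0 : (0 < p)%N by apply: leq_ltn_trans ha.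
by rewrite addnC mulnC divnMDl // divn_small // addn0.
Qed.

Lemma sum_shift p L (a : nat -> nat) X :
  (\sum_(i < L.+1) a i * p ^ i + X * p ^ L.+1 =
   a 0 + p * (\sum_(i < L) a i.+1 * p ^ i + X * p ^ L))%N.
Proof.
rewrite big_ord_recl mulnDr big_distrr /= expn0 muln1 -addnA; congr (_ + (_ + _))%N.
  by apply: eq_bigr => i _; rewrite /bump /= add1n expnS mulnCA.
by rewrite expnS mulnCA.
Qed.

Lemma digit_sum p L (a : nat -> nat) X j :
  (forall i, a i < p)%N -> (j < L)%N ->
  digit p j (\sum_(i < L) a i * p ^ i + X * p ^ L) = a j.
Proof.
elim: L a j => [//|L IH] a j ha hj.
rewrite sum_shift; case: j hj => [|j] hj.
  by rewrite digit0.
by rewrite digitS // (IH (fun i => a i.+1)).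
Qed.

Lemma digit_sum_top p L (a : nat -> nat) X :
  (forall i, a i < p)%N ->
  digit p L (\sum_(i < L) a i * p ^ i + X * p ^ L) = (X %% p)%N.
Proof.
elim: L a => [|L IH] a ha.
  by rewrite big_ord0 add0n expn0 muln1 /digit expn0 divn1.
by rewrite sum_shift digitS // (IH (fun i => a i.+1)).
Qed.

Lemma sum_lt p L (a : nat -> nat) :
  (forall i, a i < p)%N -> (\sum_(i < L) a i * p ^ i < p ^ L)%N.
Proof.
elim: L a => [|L IH] a ha; first by rewrite big_ord0.
have := sum_shift p L a 0; rewrite !mul0n !addn0 => ->.
have h1 := IH (fun i => a i.+1) (fun i => ha i.+1).
have h2 := ha 0%N.
rewrite expnS; nia.
Qed.

Lemma digit_mod p i k j : (0 < p)%N -> (i < k)%N ->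
  digit p i (j %% p ^ k) = digit p i j.
Proof.
move=> p0 ik; rewrite /digit {2}(divn_eq j (p ^ k)).
have -> : (p ^ k = (p ^ (k - i.+1) * p) * p ^ i)%N.
  by rewrite -expnSr -expnD; congr expn; lia.
rewrite mulnA divnMDl ?expn_gt0 ?p0 // mulnA.
by rewrite modnMDl.
Qed.

Lemma digits_inj p r n m : (0 < p)%N -> (n < p ^ r)%N -> (m < p ^ r)%N ->
  (forall i, i < r -> digit p i n = digit p i m)%N -> n = m.
Proof.
move=> p0; elim: r n m => [|r IH] n m hn hm hd.
  by move: hn hm; rewrite expn0; lia.
rewrite (divn_eq n p) (divn_eq m p).
have h0 := hd 0%N isT; rewrite /digit expn0 !divn1 in h0.
rewrite h0; congr (_ * _ + _)%N; apply: IH.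
- by rewrite ltn_divLR // -expnSr.
- by rewrite ltn_divLR // -expnSr.
move=> i hi; rewrite -!digit_div; exact: hd.
Qed.

Lemma YentE p k i j : (0 < p)%N -> (i < k)%N -> (j < p ^ k)%N ->
  Yent p k i j = digit p i j.
Proof.
move=> p0; elim: k i j => [//|k IH] i j hi hj /=.
case: ifP => hik.
  by rewrite IH ?ltn_pmod ?expn_gt0 ?p0 // digit_mod.
have -> : i = k by lia.
rewrite /digit modn_small // ltn_divLR ?expn_gt0 ?p0 //.
idtac.
by rewrite -expnS.
Qed.

Lemma phiE p r (u : 'Z_(p ^ r)) t : (0 < p)%N -> (t < p ^ (r - 1))%N ->
  vat (phi u) t =
  ((digit p (r - 1) u + \sum_(i < r - 1) digit p i u * digit p i t)%N%:R : 'Z_p).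
Proof.
move=> p0 ht; rewrite (vatE (phi u) (Ordinal ht)) /phi !mxE natrD natr_sum.
congr (_ + _); apply: eq_bigr => i _; rewrite !mxE natrM.
by rewrite YentE.
Qed.

Lemma phiE2 p r (u : 'Z_(p ^ r)) t : (0 < p)%N -> (t < p ^ (r - 1))%N ->
  vat (phi u) t =
  ((digit p (r - 1) u + \sum_(0 <= i < r - 1) digit p i u * digit p i t)%N%:R : 'Z_p).
Proof. by move=> p0 ht; rewrite big_mkord phiE. Qed.

Lemma PhiE p r n N (v : 'rV['Z_(p ^ r)]_n) m b t : (m < N)%N ->
  m = (b * p ^ (r - 1) + t)%N -> (t < p ^ (r - 1))%N ->
  vat (Phi N v) m = vat (phi (vat v b)) t.
Proof.
move=> hm E ht; rewrite (vatE (Phi N v) (Ordinal hm)) /Phi mxE /= E.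
have P0 : (0 < p ^ (r - 1))%N by apply: leq_ltn_trans ht.
rewrite divnMDl // divn_small // addn0 modnMDl modn_small //.
Qed.

Lemma gammaE p s (x : 'rV['Z_p]_(p ^ (s - 1))) k m : (k < p ^ (s - 1))%N ->
  m = ((k %% p) * p ^ (s - 2) + k %/ p)%N ->
  vat (gamma x) k = vat x m.
Proof.
move=> hk ->; by rewrite (vatE (gamma x) (Ordinal hk)) /gamma mxE.
Qed.

Lemma natZp_inj p a b : (1 < p)%N -> ((a%:R : 'Z_p) = b%:R) -> (a %% p = b %% p)%N.
Proof. by move=> p1 /(congr1 val); rewrite /= !val_Zp_nat. Qed.

Lemma digit_lt p i n : (0 < p)%N -> (digit p i n < p)%N.
Proof. by move=> p0; rewrite /digit ltn_pmod. Qed.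

Lemma digit_pow p i j : (1 < p)%N -> digit p j (p ^ i) = (j == i).
Proof.
move=> p1; have p0 : (0 < p)%N by apply: ltnW.
rewrite /digit; case: (ltngtP j i) => h.
- have -> : (p ^ i = p ^ (i - j.+1) * p * p ^ j)%N.
    by rewrite -expnSr -expnD; congr expn; lia.
  by rewrite mulnK ?expn_gt0 ?p0 // modnMl.
- by rewrite divn_small ?mod0n // ltn_exp2l.
- by rewrite h divnn expn_gt0 p0 modn_small.
Qed.

Lemma valZp_lt r (u : 'Z_r) : (1 < r)%N -> (u < r)%N.
Proof. by move=> r1; case: u => m /=; rewrite Zp_cast. Qed.
Lemma digit0n p i : digit p i 0 = 0%N.
Proof. by rewrite /digit div0n mod0n. Qed.

Lemma sum_digit_pow p L x i : (1 < p)%N -> (i < L)%N ->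
  (\sum_(j < L) digit p j x * digit p j (p ^ i) = digit p i x)%N.
Proof.
move=> p1 hi; rewrite (bigD1 (Ordinal hi)) //= big1 => [|j hj].
  by rewrite digit_pow // eqxx muln1 addn0.
have : (j : nat) != i by apply: contra hj => /eqP h; apply/eqP/val_inj.
by rewrite digit_pow // => /negbTE ->; rewrite muln0.
Qed.

Lemma phi_inj p r (u u' : 'Z_(p ^ r)) : (1 < p)%N -> (0 < r)%N ->
  phi u = phi u' -> u = u'.
Proof.
move=> p1 r0 E; have p0 : (0 < p)%N by apply: ltnW.
have pr1 : (1 < p ^ r)%N by rewrite -{1}(expn0 p) ltn_exp2l.
apply: val_inj.
apply: (@digits_inj p r); [done| exact: valZp_lt | exact: valZp_lt|].
have top : digit p (r - 1) u = digit p (r - 1) u'.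
  have := congr1 (fun x => vat x 0) E => /=.
  rewrite (phiE _ _ u) ?expn_gt0 ?p0 //.
  rewrite (phiE _ _ u') ?expn_gt0 ?p0 //.
  rewrite big1 => [|i _]; last by rewrite digit0n muln0.
  rewrite big1 => [|i _]; last by rewrite digit0n muln0.
  rewrite !addn0 => /natZp_inj => /(_ p1).
  by rewrite /digit !modn_mod.
move=> i hi; have [hi'|hi'] := ltnP i (r - 1); last first.
  by have -> : i = (r - 1)%N by lia.
have := congr1 (fun x => vat x (p ^ i)) E => /=.
rewrite (phiE _ _ u) ?ltn_exp2l // (phiE _ _ u') ?ltn_exp2l //.
rewrite !sum_digit_pow // !natrD top => /addrI.
by move/natZp_inj => /(_ p1); rewrite /digit !modn_mod.
Qed.

Lemma Phi_inj p r n N (v v' : 'rV['Z_(p ^ r)]_n) : (1 < p)%N -> (0 < r)%N ->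
  N = (n * p ^ (r - 1))%N -> Phi N v = Phi N v' -> v = v'.
Proof.
move=> p1 r0 hN E; have p0 : (0 < p)%N by apply: ltnW.
apply: vat_inj => b hb; apply: phi_inj => //.
apply: vat_inj => t ht.
have hm : (b * p ^ (r - 1) + t < N)%N by rewrite hN; nia.
have := congr1 (fun x => vat x (b * p ^ (r - 1) + t)%N) E => /=.
by rewrite (@PhiE _ _ _ _ v _ _ _ hm erefl ht) (@PhiE _ _ _ _ v' _ _ _ hm erefl ht).
Qed.

Lemma gamma_inj p s (x y : 'rV['Z_p]_(p ^ (s - 1))) : (0 < p)%N -> (2 <= s)%N ->
  gamma x = gamma y -> x = y.
Proof.
move=> p0 s2 E; apply: vat_inj => m hm.
have eP : (p ^ (s - 1) = p ^ (s - 2) * p)%N by rewrite -expnSr; congr expn; lia.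
have P0 : (0 < p ^ (s - 2))%N by rewrite expn_gt0 p0.
have hq : (m %/ p ^ (s - 2) < p)%N by rewrite ltn_divLR // mulnC -eP.
have hr : (m %% p ^ (s - 2) < p ^ (s - 2))%N by rewrite ltn_pmod.
set k := ((m %% p ^ (s - 2)) * p + m %/ p ^ (s - 2))%N.
have hk : (k < p ^ (s - 1))%N by rewrite eP /k; nia.
have hkm : m = ((k %% p) * p ^ (s - 2) + k %/ p)%N.
  have e1 : (k %% p = m %/ p ^ (s - 2))%N by rewrite /k modnMDl modn_small.
  have e2 : (k %/ p = m %% p ^ (s - 2))%N by rewrite /k divnMDl // divn_small // addn0.
  by rewrite e1 e2 -divn_eq.
have := congr1 (fun z => vat z k) E => /=.
by rewrite (@gammaE _ _ x _ _ hk hkm) (@gammaE _ _ y _ _ hk hkm).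
Qed.

Lemma gamma_invE p s (x y : 'rV['Z_p]_(p ^ (s - 1))) : (0 < p)%N -> (2 <= s)%N ->
  gamma x = y -> gamma_inv y = x.
Proof.
move=> p0 s2 E; rewrite /gamma_inv; case: pickP => [z /eqP hz | H] /=.
  by apply: (@gamma_inj p s) => //; rewrite hz E.
by have := H x; rewrite E eqxx.
Qed.

Lemma tau_spec p s (u : 'Z_(p ^ s)) (v : 'rV['Z_(p ^ (s - 1))]_p) :
  (1 < p)%N -> (2 <= s)%N ->
  gamma (Phi (p ^ (s - 1)) v) = phi u -> tau p s u = v.
Proof.
move=> p1 s2 E; have p0 : (0 < p)%N by apply: ltnW.
have G := @gamma_invE p s _ _ p0 s2 E.
rewrite /tau; case: pickP => [w /eqP hw | H] /=.
  apply: (@Phi_inj p (s - 1) p (p ^ (s - 1))) => //; first lia.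
    by rewrite -expnS; congr expn; lia.
  by rewrite hw G.
by have := H v; rewrite G eqxx.
Qed.

Definition cc p n b j : nat :=
  if j == 0%N then (b * p ^ n)%N else if j == n.+1 then (p ^ n)%N else (p ^ j.-1)%N.

Definition Fv p n (mu : nat -> nat) : 'rV['Z_(p ^ (n.+2 - 1))]_p :=
  \row_(b < p) ((\sum_(j < n.+2) mu j * cc p n b j)%N%:R).

Lemma W_eq p n (mu : nat -> nat) b :
  (\sum_(j < n.+2) mu j * cc p n b j =
   \sum_(i < n) mu i.+1 * p ^ i + (mu n.+1 + mu 0%N * b) * p ^ n)%N.
Proof.
rewrite big_ord_recl big_ord_recr /= /cc /= eqxx.
have -> : (\sum_(i < n) mu (bump 0 i) * (if bump 0 i == n.+1 then p ^ n else p ^ (0 + i)) =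
           \sum_(i < n) mu i.+1 * p ^ i)%N.
  apply: eq_bigr => i _; rewrite /bump /= add1n eqSS.
  by have -> : (i == n :> nat) = false by apply/negbTE; rewrite neq_ltn ltn_ord.
rewrite /bump /= add1n mulnDl mulnA; lia.
Qed.

Lemma digit_sum0 p L (a : nat -> nat) j :
  (forall i, a i < p)%N -> (j < L)%N ->
  digit p j (\sum_(i < L) a i * p ^ i) = a j.
Proof. by move=> ha hj; rewrite -[X in digit _ _ X]addn0 -(mul0n (p ^ L)%N) digit_sum. Qed.

Lemma digit_sumS p L (mu : nat -> nat) X j :
  (forall i, mu i < p)%N -> (j < L)%N ->
  digit p j (\sum_(i < L) mu i.+1 * p ^ i + X * p ^ L) = mu j.+1.
Proof. by move=> h hj; apply: (@digit_sum p L (fun i => mu i.+1)). Qed.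

Lemma digit_sumS_top p L (mu : nat -> nat) X :
  (forall i, mu i < p)%N ->
  digit p L (\sum_(i < L) mu i.+1 * p ^ i + X * p ^ L) = (X %% p)%N.
Proof. by move=> h; apply: (@digit_sum_top p L (fun i => mu i.+1)). Qed.

Lemma key p n (mu : nat -> nat) : (1 < p)%N -> (forall j, mu j < p)%N ->
  gamma (Phi (p ^ (n.+2 - 1)) (Fv p n mu)) =
  phi ((\sum_(j < n.+2) mu j * p ^ j)%N%:R : 'Z_(p ^ n.+2)).
Proof.
move=> p1 hmu; have p0 : (0 < p)%N by apply: ltnW.
apply: vat_inj => k hk.
have e1 : (n.+2 - 1 - 1 = n)%N by lia.
have e2 : (n.+2 - 2 = n)%N by lia.
have hk' : (k < p ^ n.+1)%N by [].
set b := (k %% p)%N; set t := (k %/ p)%N.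
have hb : (b < p)%N by rewrite ltn_pmod.
have ht : (t < p ^ n)%N by rewrite ltn_divLR // -expnSr.
have hm : (b * p ^ n + t < p ^ (n.+2 - 1))%N by rewrite /= expnS; nia.
rewrite (@gammaE p n.+2 _ k (b * p ^ n + t)) //; try by rewrite ?e1 ?e2.
rewrite (@PhiE p (n.+2 - 1) p (p ^ (n.+2 - 1)) _ (b * p ^ n + t) b t) //; try by rewrite ?e1 ?e2.
rewrite (vatE (Fv p n mu) (Ordinal hb)) mxE.
rewrite (@phiE2 p (n.+2 - 1) _ t) //; try by rewrite ?e1 ?e2.
rewrite (@phiE2 p n.+2 _ k) //; try by rewrite ?e1 ?e2.
rewrite e1 -[(n.+2 - 1)%N]/(n.+1) !big_mkord.
have pn1 : (1 < p ^ n.+1)%N by rewrite -{1}(expn0 p) ltn_exp2l.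
have pn2 : (1 < p ^ n.+2)%N by rewrite -{1}(expn0 p) ltn_exp2l.
rewrite !val_Zp_nat //.
rewrite (modn_small (@sum_lt p n.+2 mu hmu)).
rewrite digit_sum0 //.
rewrite digit_mod // W_eq digit_sumS_top //.
under eq_bigr => i _ do rewrite (@digit_mod p i n.+1 _ p0 (ltnW (ltn_ord i))) digit_sumS //.
rewrite natrD Zp_nat_mod // -natrD; congr (_%:R).
rewrite [in RHS]big_ord_recl digit_sum0 //.
rewrite /digit expn0 divn1 -/b -/digit addnA [(mu n.+1 + _)%N]addnC -addnA.
rewrite -addnA; congr (_ + (_ + _))%N.
apply: eq_bigr => i _; rewrite lift0 /=.
have h1 : digit p i.+1 (\sum_(i0 < n.+2) mu i0 * p ^ i0) = mu i.+1.
  apply: (@digit_sum0 p n.+2 mu i.+1 hmu).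
  by rewrite !ltnS ltnW.
have h2 := digit_div p i k.
rewrite /digit in h1 h2; rewrite h1 h2 /t.
done.
Qed.


Lemma Fv_add p n (lam : 'I_n.+2 -> 'I_p) :
  Fv p n (fun j => lam (inord j)) =
  \sum_(i < n.+2) Fv p n (fun j => if j == i then lam i : nat else 0%N).
Proof.
apply/rowP => b; rewrite /Fv summxE mxE.
rewrite [RHS](eq_bigr (fun k : 'I_n.+2 => ((\sum_(j < n.+2) (if (j : nat) == k then lam k : nat else 0%N) * cc p n b j)%N%:R))); last by move=> k _; rewrite mxE.
rewrite -natr_sum; congr (_%:R).
rewrite exchange_big /=.
apply: eq_bigr => i _.
rewrite (bigD1 i) //= big1 => [|j hj].
  by rewrite eqxx addn0 inord_val.
have : (i : nat) != j by apply: contra hj => /eqP h; apply/eqP/val_inj.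
by move/negbTE => ->; rewrite mul0n.
Qed.

Theorem corollary1 (p s : nat) (lam : 'I_s -> 'I_p) :
  prime p -> (2 <= s)%N ->
  tau p s ((\sum_(i < s) lam i * p ^ i)%N%:R)
  = \sum_(i < s) tau p s ((lam i * p ^ i)%N%:R).
Proof.
move=> pp; have p1 := prime_gt1 pp.
case: s lam => [|[|n]] lam // _.
have hmu : forall j, (lam (inord j) < p)%N by move=> j; exact: ltn_ord.
have -> : (\sum_(i < n.+2) lam i * p ^ i =
           \sum_(i < n.+2) (fun j => lam (inord j) : nat) i * p ^ i)%N.
  by apply: eq_bigr => i _; rewrite inord_val.
rewrite (@tau_spec p n.+2 _ _ p1 isT (@key p n _ p1 hmu)) Fv_add.
apply: eq_bigr => i _.
have he : forall j, ((fun j : nat => if j == i then lam i : nat else 0%N) j < p)%N.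
  by move=> j /=; case: ifP => _; [exact: ltn_ord | exact: ltnW p1].
have -> : (lam i * p ^ i =
    \sum_(j < n.+2) (fun j : nat => if j == i then lam i : nat else 0%N) j * p ^ j)%N.
  rewrite (bigD1 i) //= eqxx big1 ?addn0 // => j hj.
  have : (j : nat) != i by apply: contra hj => /eqP h; apply/eqP/val_inj.
  by move/negbTE => ->; rewrite mul0n.
by rewrite (@tau_spec p n.+2 _ _ p1 isT (@key p n _ p1 he)).
Qed.
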